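(* For every integer $n\geq 1$, $$c_n(231,312 : 231)=c_n(312,231 : 312)=2^{n-1}.$$
   Context: $S_n$ is the symmetric group on $[n]=\{1,\dots,n\}$, and a permutation $\pi\in S_n$ is written in one-line notation $\pi=\pi_1\pi_2\cdots\pi_n$ with $\pi_i=\pi(i)$. For $\tau\in S_k$, $k\le n$, $\pi$ contains $\tau$ if there are indices $i_1<\dots<i_k$ with $\pi_{i_s}>\pi_{i_t}$ iff $\tau_s>\tau_t$ for all $1\le s<t\le k$; otherwise $\pi$ avoids $\tau$. $\pi^2$ denotes the composition $\pi\circ\pi$. For patterns $\sigma_1,\sigma_2,\rho$, $c_n(\sigma_1,\sigma_2 : \rho)$ denotes the number of permutations $\pi\in S_n$ such that $\pi$ avoids both $\sigma_1$ and $\sigma_2$ and $\pi^2$ avoids $\rho$. *)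

(* Defs.v *)
From mathcomp Require Import all_boot perm.
Set Implicit Arguments. Unset Strict Implicit. Unset Printing Implicit Defensive.

(* Permutations of [n] are represented as 'S_n (permutations of 'I_n = {0..n-1});
   one-line notation pi_i = pi(i), shifted to 0-based (order preserving shift). *)

Definition contains (n k : nat) (pi : 'S_n) (tau : 'S_k) : bool :=
  [exists idx : {ffun 'I_k -> 'I_n},
    [forall s : 'I_k, forall t : 'I_k, (s < t) ==>
       ((idx s < idx t) && ((pi (idx s) > pi (idx t)) == (tau s > tau t)))]].

Definition avoids (n k : nat) (pi : 'S_n) (tau : 'S_k) : bool := ~~ contains pi tau.

(* The patterns 231 and 312 of S_3 (one-line notation, values shifted by -1). *)
Definition f231 (x : 'I_3) : 'I_3 :=
  match val x with 0 => @Ordinal 3 1 isT | 1 => @Ordinal 3 2 isT | _ => @Ordinal 3 0 isT end.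
Definition f312 (x : 'I_3) : 'I_3 :=
  match val x with 0 => @Ordinal 3 2 isT | 1 => @Ordinal 3 0 isT | _ => @Ordinal 3 1 isT end.
Lemma f231_inj : injective f231.
Proof. by move=> [[|[|[|x]]] Hx] [[|[|[|y]]] Hy] // /(congr1 val) /=; try (move=> H; apply: val_inj). Qed.
Lemma f312_inj : injective f312.
Proof. by move=> [[|[|[|x]]] Hx] [[|[|[|y]]] Hy] // /(congr1 val) /=; try (move=> H; apply: val_inj). Qed.
Definition p231 : 'S_3 := perm f231_inj.
Definition p312 : 'S_3 := perm f312_inj.

Definition c_n (n : nat) (s1 s2 rho : 'S_3) : nat :=
  #|[set pi : 'S_n | [&& avoids pi s1, avoids pi s2 & avoids (pi * pi)%g rho]]|.

(* Main.v *)
Require Import Defs.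
From mathcomp Require Import all_boot perm zify.
Set Implicit Arguments. Unset Strict Implicit. Unset Printing Implicit Defensive.

Definition allS (s : nat -> bool) (j i : nat) := all s (iota j (i - j)).

Lemma allSP (s : nat -> bool) j i : reflect (forall k, j <= k < i -> s k) (allS s j i).
Proof.
apply: (iffP allP) => H k.
- move=> /andP[h1 h2]; apply: H; rewrite mem_iota; apply/andP; split => //; lia.
- rewrite mem_iota => /andP[h1 h2]; apply: H; apply/andP; split => //; lia.
Qed.

Lemma allSPn (s : nat -> bool) j i : reflect (exists2 k, j <= k < i & ~~ s k) (~~ allS s j i).
Proof.
apply: (iffP allPn) => -[k hk hs]; exists k => //.
- move: hk; rewrite mem_iota => /andP[h1 h2]; apply/andP; split => //; lia.
- rewrite mem_iota; move: hk => /andP[h1 h2]; apply/andP; split => //; lia.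
Qed.

Lemma allS_sub (s : nat -> bool) j i j' i' : j <= j' -> i' <= i -> allS s j i -> allS s j' i'.
Proof.
move=> h1 h2 /allSP H; apply/allSP => k /andP[k1 k2]; apply: H; apply/andP; split; lia.
Qed.

Definition Rel s j i := ((j < i) && ~~ allS s j i) || ((i < j) && allS s i j).

Fixpoint alo (s : nat -> bool) (i : nat) : nat :=
  if i is i'.+1 then (if s i' then alo s i' else i) else 0.
Fixpoint bhi (s : nat -> bool) (f i : nat) : nat :=
  if f is f'.+1 then (if s i then bhi s f' i.+1 else i) else i.

Lemma alo_le (s : nat -> bool) i : alo s i <= i.
Proof. elim: i => //= i IH; case: (s i) => //; lia. Qed.

Lemma alo_all (s : nat -> bool) i l : alo s i <= l < i -> s l.
Proof.
elim: i => [|i IH] /=; first lia.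
case hs: (s i) => /andP[h1 h2]; last lia.
have [->//|ne] := eqVneq l i. apply: IH; apply/andP; split => //; lia.
Qed.

Lemma alo_stop (s : nat -> bool) i : alo s i = 0 \/ ~~ s (alo s i).-1.
Proof. elim: i => [|i IH] /=; first by left. case hs: (s i) => //. by right; rewrite hs. Qed.

Lemma alo_uniq (s : nat -> bool) i x : x <= i -> (forall l, x <= l < i -> s l) -> (x = 0 \/ ~~ s x.-1) ->
  alo s i = x.
Proof.
elim: i => [|i IH] /= hx hall hst; first lia.
have [e|ne] := eqVneq x i.+1.
- subst x; case: hst => // /negbTE ->; done.
- have -> : s i by apply: hall; apply/andP; split; lia.
  apply: IH => //; first lia. move=> l /andP[l1 l2]; apply: hall; apply/andP; split; lia.
Qed.

Lemma bhi_ge (s : nat -> bool) f i : i <= bhi s f i.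
Proof. elim: f i => //= f IH i; case: (s i) => //; have := IH i.+1; lia. Qed.

Lemma bhi_all (s : nat -> bool) f i l : i <= l < bhi s f i -> s l.
Proof.
elim: f i => [|f IH] i /=; first lia.
case hs: (s i) => /andP[h1 h2]; last lia.
have [->//|ne] := eqVneq l i. apply: (IH i.+1); apply/andP; split => //; lia.
Qed.

Lemma bhi_le (s : nat -> bool) N f i : (forall k, s k -> k < N) -> i <= N -> bhi s f i <= N.
Proof.
move=> hs; elim: f i => [|f IH] i /= hi //.
case e: (s i) => //; apply: IH; have := hs _ e; lia.
Qed.

Lemma bhi_uniq (s : nat -> bool) f i x : i <= x -> x - i <= f -> (forall l, i <= l < x -> s l) -> ~~ s x ->
  bhi s f i = x.
Proof.
elim: f i => [|f IH] i /= h1 h2 hall hst; first lia.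
have [e|ne] := eqVneq i x.
- subst; by rewrite (negbTE hst).
- have -> : s i by apply: hall; apply/andP; split; lia.
  apply: IH => //; try lia. move=> l /andP[l1 l2]; apply: hall; apply/andP; split; lia.
Qed.

Lemma bhi_stop (s : nat -> bool) N f i : (forall k, s k -> k < N) -> i <= N -> N - i <= f -> ~~ s (bhi s f i).
Proof.
move=> hs; elim: f i => [|f IH] i /= h1 h2.
- have -> : i = N by lia. by apply/negP => /hs; rewrite ltnn.
- case e: (s i); last by rewrite e.
  have := hs _ e => hi. apply: IH; lia.
Qed.

Definition Bh s N i := bhi s N i.
Definition Lf s N i := alo s i + Bh s N i - i.

Lemma blk (s : nat -> bool) N j i : (forall k, s k -> k < N) -> j <= i -> i <= N ->
  (forall l, j <= l < i -> s l) -> alo s j = alo s i /\ Bh s N j = Bh s N i.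
Proof.
move=> hs hji hiN hall; split.
- apply: alo_uniq.
  + case: (leqP (alo s i) j) => // hlt.
    case: (alo_stop s i) => [|]; first lia.
    have hi := alo_le s i.
    by rewrite (hall (alo s i).-1) //; apply/andP; split; lia.
  + move=> l /andP[l1 l2]; apply: (alo_all (i:=i)); apply/andP; split; lia.
  + exact: alo_stop.
- rewrite /Bh; have hb := bhi_le N hs hiN; have hg := bhi_ge s N i.
  apply: bhi_uniq; try lia.
  + move=> l /andP[l1 l2]; case: (ltnP l i) => hl.
    * apply: hall; apply/andP; split; lia.
    * apply: (bhi_all (f:=N) (i:=i)); apply/andP; split. done. lia.
  + apply: (bhi_stop (N:=N)) hs _ _; lia.
Qed.

Lemma L_invol (s : nat -> bool) N i : (forall k, s k -> k < N) -> i <= N -> Lf s N (Lf s N i) = i /\ Lf s N i <= N.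
Proof.
move=> hs hi.
have ha := alo_le s i; have hg := bhi_ge s N i; have hb := bhi_le N hs hi.
rewrite /Lf /Bh in hg hb *.
set L := alo s i + bhi s N i - i.
have hL : L <= N by rewrite /L; lia.
have [e1 e2] : alo s L = alo s i /\ bhi s N L = bhi s N i.
  case: (leqP L i) => hLi.
  - apply: blk => // l /andP[l1 l2]; apply: (alo_all (i:=i)); apply/andP; split; rewrite /L in l1; lia.
  - have hall : forall l, i <= l < L -> s l.
      move=> l /andP[l1 l2]; apply: (bhi_all (f:=N) (i:=i)); apply/andP; split; rewrite /L in l2; lia.
    have [e1 e2] := blk hs (ltnW hLi) hL hall. by rewrite /Bh in e2; rewrite e1 e2.
rewrite e1 e2 /L; split; lia.
Qed.

Lemma L_good (s : nat -> bool) N i j : (forall k, s k -> k < N) -> i <= N -> j <= N ->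
  (Lf s N j < Lf s N i) = Rel s j i.
Proof.
move=> hs hi hj; rewrite /Rel /Lf /Bh.
have hai := alo_le s i; have hgi := bhi_ge s N i; have hbi := bhi_le N hs hi.
have haj := alo_le s j; have hgj := bhi_ge s N j; have hbj := bhi_le N hs hj.
case: (ltngtP j i) => h /=.
- case: (boolP (allS s j i)) => H /=.
  + have [e1 e2] := blk hs (ltnW h) hi (elimT (allSP s j i) H).
    rewrite /Bh in e2; rewrite e1 e2; apply/negbTE; rewrite -leqNgt; lia.
  + case/allSPn: H => k /andP[k1 k2] hk.
    have h1 : bhi s N j <= k.
      case: (leqP (bhi s N j) k) => // hlt.
      by rewrite (bhi_all (f:=N) (i:=j)) in hk; [|apply/andP; split].
    have h2 : k < alo s i.
      case: (ltnP k (alo s i)) => // hle.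
      by rewrite (alo_all (i:=i)) in hk; [|apply/andP; split].
    apply/idP; lia.
- case: (boolP (allS s i j)) => H /=.
  + have [e1 e2] := blk hs (ltnW h) hj (elimT (allSP s i j) H).
    rewrite /Bh in e2; rewrite -e1 -e2; apply/idP; lia.
  + case/allSPn: H => k /andP[k1 k2] hk.
    have h1 : bhi s N i <= k.
      case: (leqP (bhi s N i) k) => // hlt.
      by rewrite (bhi_all (f:=N) (i:=i)) in hk; [|apply/andP; split].
    have h2 : k < alo s j.
      case: (ltnP k (alo s j)) => // hle.
      by rewrite (alo_all (i:=j)) in hk; [|apply/andP; split].
    apply/negbTE; rewrite -leqNgt; lia.
- by subst; rewrite ltnn.
Qed.

Definition no231 (g : nat -> nat) N := forall p q r, p < q -> q < r -> r <= N ->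
  ~~ ((g r < g p) && (g p < g q)).
Definition no312 (g : nat -> nat) N := forall p q r, p < q -> q < r -> r <= N ->
  ~~ ((g q < g r) && (g r < g p)).
Definition ginj (g : nat -> nat) N := forall x y, x <= N -> y <= N -> g x = g y -> x = y.

Lemma gneq g N x y : ginj g N -> x <= N -> y <= N -> x != y -> g x != g y.
Proof. move=> hi hx hy; apply: contra => /eqP e; apply/eqP; exact: hi. Qed.

Lemma P1 g N k j l : ginj g N -> no231 g N -> no312 g N -> k < N -> g k < g k.+1 ->
  j <= k -> k < l -> l <= N -> g j < g l.
Proof.
move=> hi h231 h312 hk hkk hj hl hlN.
rewrite ltnNge; apply/negP => Hle.
have Hlj : g l < g j.
  rewrite ltn_neqAle Hle andbT; apply: (gneq (N:=N)) => //; lia.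
case: (ltnP (g l) (g k)) => h1.
- have hl' : k.+1 < l.
    have [e|ne] := eqVneq l k.+1; first by subst; lia. lia.
  by move/negP: (h231 k k.+1 l (ltnSn k) hl' hlN); apply; rewrite h1 hkk.
- have h1' : g k < g l.
    rewrite ltn_neqAle h1 andbT; apply: (gneq (N:=N)) => //; lia.
  case: (ltnP (g k.+1) (g j)) => h2.
  + have hj' : j < k.
      have [e|ne] := eqVneq j k; first by subst; lia. lia.
    by move/negP: (h312 j k k.+1 hj' (ltnSn k) hk); apply; rewrite hkk h2.
  + have h2' : g j < g k.+1.
      rewrite ltn_neqAle h2 andbT; apply: (gneq (N:=N)) => //; lia.
    have hl' : k.+1 < l.
      have [e|ne] := eqVneq l k.+1; first by subst; lia. lia.
    have hjk : j < k.+1 by lia.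
    by move/negP: (h231 j k.+1 l hjk hl' hlN); apply; rewrite Hlj h2'.
Qed.

Lemma chain (g : nat -> nat) (s : nat -> bool) N j i :
  (forall k, s k = (k < N) && (g k.+1 < g k)) -> j < i ->
  (forall l, j <= l < i -> s l) -> g i < g j.
Proof.
move=> hs; elim: i => [|i IH] // hji hall.
have : s i by apply: hall; apply/andP; split; lia.
rewrite hs => /andP[_ h].
have [e|ne] := eqVneq j i; first by subst.
apply: (ltn_trans h); apply: IH; first lia.
move=> l /andP[l1 l2]; apply: hall; apply/andP; split; lia.
Qed.

Lemma nat_good (g : nat -> nat) (s : nat -> bool) N i j :
  (forall k, s k = (k < N) && (g k.+1 < g k)) -> ginj g N -> no231 g N -> no312 g N ->
  i <= N -> j <= N -> (g j < g i) = Rel s j i.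
Proof.
move=> hs hi h231 h312 hiN hjN; rewrite /Rel.
case: (ltngtP j i) => h /=.
- case: (boolP (allS s j i)) => H /=.
  + apply/negbTE; rewrite -leqNgt; apply: ltnW; exact: (chain hs h (elimT (allSP s j i) H)).
  + case/allSPn: H => k /andP[k1 k2]; rewrite hs negb_and => hk.
    have hkN : k < N by lia.
    rewrite hkN /= -leqNgt in hk.
    have hk' : g k < g k.+1 by rewrite ltn_neqAle hk andbT; apply: (gneq (N:=N)) => //; lia.
    apply: (P1 hi h231 h312 hkN hk' k1) => //.
- case: (boolP (allS s i j)) => H /=.
  + exact: (chain hs h (elimT (allSP s i j) H)).
  + case/allSPn: H => k /andP[k1 k2]; rewrite hs negb_and => hk.
    have hkN : k < N by lia.
    rewrite hkN /= -leqNgt in hk.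
    have hk' : g k < g k.+1 by rewrite ltn_neqAle hk andbT; apply: (gneq (N:=N)) => //; lia.
    apply/negbTE; rewrite -leqNgt; apply: ltnW.
    apply: (P1 hi h231 h312 hkN hk' k1) => //.
- by subst; rewrite ltnn.
Qed.

Lemma good_no231 (g : nat -> nat) (s : nat -> bool) N :
  (forall i j, i <= N -> j <= N -> (g j < g i) = Rel s j i) -> no231 g N.
Proof.
move=> hg p q r hpq hqr hrN; apply/negP => /andP[h1 h2].
rewrite (hg p r) /Rel in h1; try lia. rewrite (hg q p) /Rel in h2; try lia.
case/orP: h1 => /andP[a1 b1]; first lia.
case/orP: h2 => /andP[a2 b2]; last lia.
by move/negP: b2; apply; apply: (allS_sub (leqnn p) (ltnW hqr) b1).
Qed.

Lemma good_no312 (g : nat -> nat) (s : nat -> bool) N :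
  (forall i j, i <= N -> j <= N -> (g j < g i) = Rel s j i) -> no312 g N.
Proof.
move=> hg p q r hpq hqr hrN; apply/negP => /andP[h1 h2].
rewrite (hg r q) /Rel in h1; try lia. rewrite (hg p r) /Rel in h2; try lia.
case/orP: h1 => /andP[a1 b1]; last lia.
case/orP: h2 => /andP[a2 b2]; first lia.
by move/negP: b1; apply; apply: (allS_sub (ltnW hpq) (leqnn r) b2).
Qed.

Definition gp N (pi : 'S_N.+1) (x : nat) : nat := nat_of_ord (pi (inord x)).

Lemma gp_val N (pi : 'S_N.+1) (i : 'I_N.+1) : gp pi i = pi i.
Proof. by rewrite /gp inord_val. Qed.

Lemma gp_inj N (pi : 'S_N.+1) : ginj (gp pi) N.
Proof.
move=> x y hx hy /val_inj/perm_inj/(congr1 (@nat_of_ord _)); rewrite !inordK //; lia.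
Qed.

Definition o0 : 'I_3 := @Ordinal 3 0 isT.
Definition o1 : 'I_3 := @Ordinal 3 1 isT.
Definition o2 : 'I_3 := @Ordinal 3 2 isT.

Lemma avoid231_no N (pi : 'S_N.+1) : avoids pi p231 -> no231 (gp pi) N.
Proof.
move=> hav p q r hpq hqr hrN; apply/negP => /andP[h1 h2]; move/negP: hav; apply.
have hp : p < N.+1 by lia. have hq : q < N.+1 by lia. have hr : r < N.+1 by lia.
rewrite /gp in h1 h2.
apply/existsP; exists [ffun t : 'I_3 => (inord (match val t with 0 => p | 1 => q | _ => r end) : 'I_N.+1)].
apply/forallP => a; apply/forallP => b; rewrite !ffunE !permE.
case: a => [[|[|[|a]]] ha]; case: b => [[|[|[|b]]] hb] //=; rewrite ?inordK //;
  apply/andP; split => //; try lia. all: apply/eqP. all: lia.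
Qed.

Lemma avoid312_no N (pi : 'S_N.+1) : avoids pi p312 -> no312 (gp pi) N.
Proof.
move=> hav p q r hpq hqr hrN; apply/negP => /andP[h1 h2]; move/negP: hav; apply.
have hp : p < N.+1 by lia. have hq : q < N.+1 by lia. have hr : r < N.+1 by lia.
rewrite /gp in h1 h2.
apply/existsP; exists [ffun t : 'I_3 => (inord (match val t with 0 => p | 1 => q | _ => r end) : 'I_N.+1)].
apply/forallP => a; apply/forallP => b; rewrite !ffunE !permE.
case: a => [[|[|[|a]]] ha]; case: b => [[|[|[|b]]] hb] //=; rewrite ?inordK //;
  apply/andP; split => //; try lia; apply/eqP; lia.
Qed.

Lemma ord_perm_neq n (pi : 'S_n) (a b : 'I_n) : a < b -> (pi a : nat) != pi b.
Proof. move=> h; apply/eqP => /val_inj/perm_inj e; by rewrite e ltnn in h. Qed.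

Lemma no231_avoid N (pi : 'S_N.+1) : no231 (gp pi) N -> avoids pi p231.
Proof.
move=> hno; apply/negP => /existsP[idx /forallP H].
have H01 := implyP (forallP (H o0) o1) isT.
have H02 := implyP (forallP (H o0) o2) isT.
have H12 := implyP (forallP (H o1) o2) isT.
rewrite !permE /= in H01 H02 H12.
case/andP: H01 => a01 /eqP b01; case/andP: H02 => a02 /eqP b02; case/andP: H12 => a12 /eqP b12.
have n01 := ord_perm_neq pi a01.
move/negP: (hno (idx o0) (idx o1) (idx o2) a01 a12 (ltn_ord (idx o2))); apply.
rewrite !gp_val b02 /=; by rewrite ltn_neqAle n01 leqNgt b01.
Qed.

Lemma no312_avoid N (pi : 'S_N.+1) : no312 (gp pi) N -> avoids pi p312.
Proof.
move=> hno; apply/negP => /existsP[idx /forallP H].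
have H01 := implyP (forallP (H o0) o1) isT.
have H02 := implyP (forallP (H o0) o2) isT.
have H12 := implyP (forallP (H o1) o2) isT.
rewrite !permE /= in H01 H02 H12.
case/andP: H01 => a01 /eqP b01; case/andP: H02 => a02 /eqP b02; case/andP: H12 => a12 /eqP b12.
have n12 := ord_perm_neq pi a12.
move/negP: (hno (idx o0) (idx o1) (idx o2) a01 a12 (ltn_ord (idx o2))); apply.
rewrite !gp_val b02 andbT; by rewrite ltn_neqAle n12 leqNgt b12.
Qed.

Lemma id_avoid n (rho : 'S_3) : rho o2 < rho o0 -> avoids (1 : 'S_n) rho.
Proof.
move=> hr; apply/negP => /existsP[idx /forallP H].
have := implyP (forallP (H o0) o2) isT; rewrite !perm1 hr => /andP[h /eqP e]; lia.
Qed.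

Lemma id_avoid231 n : avoids (1 : 'S_n) p231.
Proof. by apply: id_avoid; rewrite !permE. Qed.
Lemma id_avoid312 n : avoids (1 : 'S_n) p312.
Proof. by apply: id_avoid; rewrite !permE. Qed.

Definition GoodP N (s : nat -> bool) (pi : 'S_N.+1) :=
  forall i j : 'I_N.+1, (pi j < pi i) = Rel s j i.

Lemma card_lt_ord n (v : 'I_n) : #|[set x : 'I_n | x < v]| = v.
Proof.
have -> : [set x : 'I_n | x < v] = [set widen_ord (ltnW (ltn_ord v)) y | y : 'I_v].
  apply/setP => x; rewrite inE; apply/idP/imsetP => [hx | [y _ ->]].
  - by exists (Ordinal hx) => //; apply: val_inj.
  - exact: (ltn_ord y).
rewrite card_imset ?card_ord //; by move=> a b /(congr1 (@nat_of_ord _)) /= e; apply: val_inj.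
Qed.

Lemma rank_perm n (pi : 'S_n) i : nat_of_ord (pi i) = #|[set j | pi j < pi i]|.
Proof.
have -> : [set j | pi j < pi i] = pi @^-1: [set x : 'I_n | x < pi i] by apply/setP => j; rewrite !inE.
by rewrite card_preimset ?card_lt_ord //; exact: perm_inj.
Qed.

Lemma good_uniq N (s : nat -> bool) (pi sg : 'S_N.+1) : GoodP s pi -> GoodP s sg -> pi = sg.
Proof.
move=> hp hs; apply/permP => i; apply: val_inj => /=.
rewrite (rank_perm pi i) (rank_perm sg i); apply: eq_card => j; by rewrite !inE hp hs.
Qed.

Definition sS N (S : {set 'I_N.+1}) (k : nat) := (k < N) && ((inord k : 'I_N.+1) \in S).
Definition Des N (pi : 'S_N.+1) : {set 'I_N.+1} :=
  [set k : 'I_N.+1 | (k < N) && (pi (inord k.+1) < pi k)].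

Lemma avoid_good N (pi : 'S_N.+1) : avoids pi p231 -> avoids pi p312 -> GoodP (sS (Des pi)) pi.
Proof.
move=> h1 h2 i j.
have hs : forall k, sS (Des pi) k = (k < N) && (gp pi k.+1 < gp pi k).
  move=> k; rewrite /sS inE; case: (ltnP k N) => hk //=.
  rewrite inordK; [by rewrite hk | lia].
rewrite -!gp_val; apply: (nat_good hs (@gp_inj N pi) (avoid231_no h1) (avoid312_no h2)); rewrite -ltnS; exact: ltn_ord.
Qed.

Lemma fL_inj N (s : nat -> bool) (hs : forall k, s k -> k < N) :
  injective (fun i : 'I_N.+1 => (inord (Lf s N i) : 'I_N.+1)).
Proof.
move=> i j /(congr1 (@nat_of_ord _)).
have hi : (i : nat) <= N by rewrite -ltnS. have hj : (j : nat) <= N by rewrite -ltnS.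
have [e1 l1] := L_invol hs hi; have [e2 l2] := L_invol hs hj.
rewrite !inordK // => e; apply: val_inj => /=.
by rewrite -e1 -e2 e.
Qed.

Definition Lperm N (s : nat -> bool) (hs : forall k, s k -> k < N) : 'S_N.+1 := perm (fL_inj hs).

Lemma Lperm_good N (s : nat -> bool) (hs : forall k, s k -> k < N) : GoodP s (Lperm hs).
Proof.
move=> i j; rewrite !permE.
have hi : (i : nat) <= N by rewrite -ltnS. have hj : (j : nat) <= N by rewrite -ltnS.
have [_ l1] := L_invol hs hi; have [_ l2] := L_invol hs hj.
rewrite !inordK //; exact: L_good.
Qed.

Lemma Lperm_inv N (s : nat -> bool) (hs : forall k, s k -> k < N) : (Lperm hs * Lperm hs = 1)%g.
Proof.
apply/permP => i; rewrite permM !permE ?perm1; apply: val_inj => /=.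
have hi : (i : nat) <= N by rewrite -ltnS.
have [e1 l1] := L_invol hs hi.
by rewrite !inordK // e1.
Qed.

Lemma av_inv N (pi : 'S_N.+1) : avoids pi p231 -> avoids pi p312 -> (pi * pi = 1)%g.
Proof.
move=> h1 h2.
have hs : forall k, sS (Des pi) k -> k < N by move=> k /andP[].
have -> : pi = Lperm hs by apply: (good_uniq (avoid_good h1 h2) (Lperm_good hs)).
exact: Lperm_inv.
Qed.

Lemma card_av N : #|[set pi : 'S_N.+1 | avoids pi p231 && avoids pi p312]| = 2 ^ N.
Proof.
set Av := [set pi : 'S_N.+1 | avoids pi p231 && avoids pi p312].
have hinj : {in Av &, injective (@Des N)}.
  move=> p1 p2; rewrite !inE => /andP[a1 b1] /andP[a2 b2] e.
  apply: (good_uniq (avoid_good a1 b1)); rewrite e; exact: avoid_good.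
rewrite -(card_in_imset hinj).
have -> : (@Des N) @: Av = powerset [set~ ord_max].
  apply/setP => S; rewrite powersetE; apply/imsetP/idP.
  - move=> [p _ ->]; apply/subsetP => k; rewrite !inE => /andP[hk _]; apply/eqP => e.
    by rewrite e /= ltnn in hk.
  - move=> hS.
    have hs : forall k, sS S k -> k < N by move=> k /andP[].
    exists (Lperm hs).
    + rewrite inE; have hg := Lperm_good hs.
      have hg' : forall i j, i <= N -> j <= N ->
          (gp (Lperm hs) j < gp (Lperm hs) i) = Rel (sS S) j i.
        move=> i j hi hj; rewrite /gp hg !inordK //; lia.
      apply/andP; split; [apply: no231_avoid; exact: good_no231 hg' |
                          apply: no312_avoid; exact: good_no312 hg'].
    + apply/setP => k; rewrite inE.
      case: (ltnP k N) => hk /=.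
      * rewrite (Lperm_good hs) inordK; last lia.
        rewrite /Rel /allS subSnn /= ltnSn /= andbT.
        have -> : (k.+1 < k) = false by apply/negbTE; rewrite -leqNgt.
        by rewrite /sS hk inord_val.
      * apply/negbTE/negP => kS; have := subsetP hS k kS; rewrite !inE.
        move/eqP; apply; apply: val_inj => /=; have := ltn_ord k; lia.
by rewrite card_powerset cardsC1 card_ord.
Qed.

Theorem theorem3p4 (n : nat) (hn : 1 <= n) :
  c_n n p231 p312 p231 = 2 ^ n.-1 /\ c_n n p312 p231 p312 = 2 ^ n.-1.
Proof.
move: hn; case: n => [//|N] _ /=.
split; rewrite /c_n -(card_av N); apply: eq_card => pi; rewrite !inE.
- case: (boolP (avoids pi p231)) => h1 //=; case: (boolP (avoids pi p312)) => h2 //=.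
  by rewrite av_inv // id_avoid231.
- case: (boolP (avoids pi p231)) => h1 //=; case: (boolP (avoids pi p312)) => h2 //=;
    rewrite ?andbF //.
  by rewrite av_inv // id_avoid312.
Qed.
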